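(* Let $\psi\colon\mathbb R^2\to\mathbb R$ be smooth and $p_\ast\in\mathbb R^2$ be such that conditions 1–7 below hold with $N=2$. Let $\alpha,c>0$, $\varpi\in\mathbb N$, $U(\tau):=\alpha\sin(\varpi\tau)$, $v(\tau):=c\sin(\varpi\tau)$, and for $a\in\mathbb R$ define $\phi^a\colon\mathbb R^2\times\mathbb S^1\to\mathbb R$ by $\phi^a([p,o]):=\frac1{2\pi}\int_0^{2\pi}\int_0^1(1-s)\,U(\tau)^2v(\tau)\,\langle\nabla^2\psi(p+asU(\tau)o)o,o\rangle\,\mathrm ds\,\mathrm d\tau$. Then there exist $a_0',\kappa>0$ such that $|\phi^a(x)|\le\kappa|\nabla\psi(p)|$ for every $a\in[0,a_0']$ and every $x=[p,o]\in\mathbb R^2\times\mathbb S^1$.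
   Context: $\mathbb S^1$ is the unit circle in $\mathbb R^2$. Notation: $y_\ast:=\psi(p_\ast)$, $\underline y:=\inf\psi\in\mathbb R\cup\{-\infty\}$, $|\nabla^2\psi(p)|$ the operator norm of the Hessian, $\psi^{-1}(\ge y):=\{p:\psi(p)\ge y\}$. Conditions: (1) $\psi(p)<y_\ast$ for $p\ne p_\ast$; (2) $\nabla^2\psi(p_\ast)$ negative definite; (3) there is $r_1>0$ with $\psi(p_\ast+v)=\psi(p_\ast-v)$ for $|v|\le r_1$; (4) there is $c_1>0$ with $|\nabla^2\psi(p)|\le c_1$ for all $p$; (5) $\nabla\psi(p)\ne0$ for $p\ne p_\ast$; (6) for every $y\in(\underline y,y_\ast)$, $\psi^{-1}(\ge y)$ is compact; (7) there are $c_2,r_2,r_3>0$ with $|\nabla^2\psi(p+v)|\le c_2|\nabla\psi(p)|$ for all $|p-p_\ast|\ge r_2$, $|v|\le r_3$. *)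

(* Defs.v *)
From Stdlib Require Import Reals Lra List.
From Coquelicot Require Import Coquelicot.
Open Scope R_scope.

Definition vadd (p q : R * R) : R * R := (fst p + fst q, snd p + snd q).
Definition vsub (p q : R * R) : R * R := (fst p - fst q, snd p - snd q).
Definition vopp (p : R * R) : R * R := (- fst p, - snd p).
Definition vscal (k : R) (p : R * R) : R * R := (k * fst p, k * snd p).
Definition dot (p q : R * R) : R := fst p * fst q + snd p * snd q.
Definition vnorm (p : R * R) : R := sqrt (dot p p).

Definition d1 (f : R * R -> R) : R * R -> R :=
  fun p => Derive (fun t => f (t, snd p)) (fst p).
Definition d2 (f : R * R -> R) : R * R -> R :=
  fun p => Derive (fun t => f (fst p, t)) (snd p).
Definition pd (b : bool) := if b then d1 else d2.
Fixpoint Dl (l : list bool) (f : R * R -> R) : R * R -> R :=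
  match l with nil => f | b :: l' => pd b (Dl l' f) end.

Definition smooth (f : R * R -> R) : Prop :=
  forall l : list bool,
    (forall p : R * R,
        ex_derive (fun t => Dl l f (t, snd p)) (fst p) /\
        ex_derive (fun t => Dl l f (fst p, t)) (snd p)) /\
    (forall p : R * R, continuous (Dl l f) p).

Definition grad (f : R * R -> R) (p : R * R) : R * R := (d1 f p, d2 f p).
Definition hess_apply (f : R * R -> R) (p v : R * R) : R * R :=
  (d1 (d1 f) p * fst v + d1 (d2 f) p * snd v,
   d2 (d1 f) p * fst v + d2 (d2 f) p * snd v).
Definition hess_opnorm (f : R * R -> R) (p : R * R) : Rbar :=
  Lub_Rbar (fun r => exists v, vnorm v = 1 /\ r = vnorm (hess_apply f p v)).

Definition compact2 (K : R * R -> Prop) : Prop :=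
  forall (I : Type) (U : I -> (R * R -> Prop)),
    (forall i, open (U i)) ->
    (forall x, K x -> exists i, U i x) ->
    exists l : list I, forall x, K x -> exists i, In i l /\ U i x.

Definition inf_val (psi : R * R -> R) : Rbar :=
  Glb_Rbar (fun r => exists p, r = psi p).

(* Conditions (1)-(7) *)
Definition conditions (psi : R * R -> R) (ps : R * R) : Prop :=
  (* (1) *) (forall p, p <> ps -> psi p < psi ps) /\
  (* (2) *) (forall v, v <> (0, 0) -> dot (hess_apply psi ps v) v < 0) /\
  (* (3) *) (exists r1, 0 < r1 /\ forall v, vnorm v <= r1 ->
                 psi (vadd ps v) = psi (vsub ps v)) /\
  (* (4) *) (exists c1, 0 < c1 /\ forall p, Rbar_le (hess_opnorm psi p) c1) /\
  (* (5) *) (forall p, p <> ps -> grad psi p <> (0, 0)) /\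
  (* (6) *) (forall y, Rbar_lt (inf_val psi) y -> y < psi ps ->
                 compact2 (fun p => psi p >= y)) /\
  (* (7) *) (exists c2 r2 r3, 0 < c2 /\ 0 < r2 /\ 0 < r3 /\
               forall p v, vnorm (vsub p ps) >= r2 -> vnorm v <= r3 ->
                 Rbar_le (hess_opnorm psi (vadd p v))
                         (c2 * vnorm (grad psi p))).

Definition phi (psi : R * R -> R) (alpha c : R) (w : nat) (a : R)
    (p o : R * R) : R :=
  let U := fun tau => alpha * sin (INR w * tau) in
  let v := fun tau => c * sin (INR w * tau) in
  / (2 * PI) *
  RInt (fun tau =>
    RInt (fun s =>
      (1 - s) * (U tau) ^ 2 * v tau *
      dot (hess_apply psi (vadd p (vscal (a * s * U tau) o)) o) o) 0 1)
    0 (2 * PI).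

(* Main.v *)
Require Import Defs.
From Stdlib Require Import Reals.
From Coquelicot Require Import Coquelicot.
From Stdlib Require Import Lra Psatz List Classical IndefiniteDescription.
Open Scope R_scope.


Lemma abs_le_vnorm1 v : Rabs (fst v) <= vnorm v.
Proof.
  unfold vnorm, dot. rewrite <- sqrt_Rsqr_abs. apply sqrt_le_1_alt.
  unfold Rsqr. nra.
Qed.
Lemma abs_le_vnorm2 v : Rabs (snd v) <= vnorm v.
Proof.
  unfold vnorm, dot. rewrite <- sqrt_Rsqr_abs. apply sqrt_le_1_alt.
  unfold Rsqr. nra.
Qed.
Lemma vnorm_le_sum v : vnorm v <= Rabs (fst v) + Rabs (snd v).
Proof.
  unfold vnorm, dot.
  assert (0 <= Rabs (fst v) + Rabs (snd v)) by (pose proof (Rabs_pos (fst v)); pose proof (Rabs_pos (snd v)); lra).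
  rewrite <- (sqrt_Rsqr (Rabs (fst v) + Rabs (snd v))) by lra.
  apply sqrt_le_1_alt. unfold Rsqr.
  pose proof (Rabs_pos (fst v)); pose proof (Rabs_pos (snd v)).
  assert (E1: fst v * fst v = Rabs (fst v) * Rabs (fst v)) by (rewrite <- Rabs_mult; symmetry; apply Rabs_right; nra).
  assert (E2: snd v * snd v = Rabs (snd v) * Rabs (snd v)) by (rewrite <- Rabs_mult; symmetry; apply Rabs_right; nra).
  rewrite E1, E2. nra.
Qed.
Lemma vnorm_pos v : 0 <= vnorm v.
Proof. apply sqrt_pos. Qed.
Lemma dot_cs u o : Rabs (dot u o) <= vnorm u * vnorm o.
Proof.
  unfold vnorm. rewrite <- sqrt_mult by (unfold dot; nra).
  rewrite <- sqrt_Rsqr_abs. apply sqrt_le_1_alt. unfold dot, Rsqr.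
  destruct u as [u1 u2]; destruct o as [o1 o2]; simpl.
  pose proof (Rle_0_sqr (u1 * o2 - u2 * o1)). unfold Rsqr in *. nra.
Qed.

Lemma cont_box (f : R * R -> R) p : continuous f p ->
  forall eps, 0 < eps -> exists d, 0 < d /\ forall q,
    Rabs (fst q - fst p) < d -> Rabs (snd q - snd p) < d -> Rabs (f q - f p) < eps.
Proof.
  intros Hc eps Heps.
  destruct (proj1 (filterlim_locally f (f p)) Hc (mkposreal eps Heps)) as [d Hd].
  exists d. split. apply cond_pos. intros q H1 H2.
  apply (Hd q). split; assumption.
Qed.


Lemma F_le_opnorm psi q o (M : R) : vnorm o = 1 ->
  Rbar_le (hess_opnorm psi q) (Finite M) -> Rabs (dot (hess_apply psi q o) o) <= M.
Proof.
  intros Ho HM.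
  eapply Rle_trans. apply dot_cs. rewrite Ho, Rmult_1_r.
  destruct (Lub_Rbar_correct (fun r => exists v, vnorm v = 1 /\ r = vnorm (hess_apply psi q v))) as [Hub _].
  assert (H := Hub (vnorm (hess_apply psi q o)) (ex_intro _ o (conj Ho eq_refl))).
  unfold hess_opnorm in HM.
  exact (Rbar_le_trans (Finite _) _ (Finite M) H HM).
Qed.

Lemma smooth_d1 psi l q : smooth psi ->
  ex_derive (fun t => Dl l psi (t, snd q)) (fst q).
Proof. intros Hs. exact (proj1 (proj1 (Hs l) q)). Qed.
Lemma smooth_d2 psi l q : smooth psi ->
  ex_derive (fun t => Dl l psi (fst q, t)) (snd q).
Proof. intros Hs. exact (proj2 (proj1 (Hs l) q)). Qed.

Lemma Derive_refl (G : R -> R) c x : ex_derive G (c - x) ->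
  Derive (fun t => G (c - t)) x = - Derive G (c - x).
Proof.
  intros HG. rewrite (Derive_comp G (fun t => c - t)) by (auto; auto_derive; auto).
  replace (Derive (fun t => c - t) x) with (-1). ring.
  symmetry. apply is_derive_unique. auto_derive; auto.
Qed.

Lemma even_Dl psi ps r (Hs : smooth psi) (Hr : 0 < r)
  (Hsym : forall v, vnorm v <= r -> psi (vadd ps v) = psi (vsub ps v)) :
  forall l q, Rabs (fst q - fst ps) < r/2 -> Rabs (snd q - snd ps) < r/2 ->
  Dl l psi q = (-1)^(length l) * Dl l psi (2*fst ps - fst q, 2*snd ps - snd q).
Proof.
  induction l as [|b l IH]; intros q H1 H2.
  - simpl. rewrite Rmult_1_l.
    set (v := (fst q - fst ps, snd q - snd ps)).
    assert (Hv : vnorm v <= r).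
    { eapply Rle_trans. apply vnorm_le_sum. simpl. lra. }
    assert (E1 : q = vadd ps v) by (destruct q; unfold vadd, v; simpl; f_equal; ring).
    assert (E2 : (2 * fst ps - fst q, 2 * snd ps - snd q) = vsub ps v)
      by (unfold vsub, v; simpl; f_equal; ring).
    rewrite E2. rewrite E1 at 1. apply Hsym; auto.
  - destruct b; simpl Dl; simpl length.
    + unfold pd, Defs.d1. simpl fst; simpl snd.
      rewrite (Derive_ext_loc _ (fun t => (-1)^(length l) *
          Dl l psi (2 * fst ps - t, 2 * snd ps - snd q))).
      2:{ assert (Hd : 0 < r/2 - Rabs (fst q - fst ps)) by lra.
          exists (mkposreal _ Hd). intros t Ht.
          change (Rabs (t - fst q) < r/2 - Rabs (fst q - fst ps)) in Ht.
          apply (IH (t, snd q)); simpl; auto.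
          pose proof (Rabs_triang (t - fst q) (fst q - fst ps)).
          replace (t - fst ps) with ((t - fst q) + (fst q - fst ps)) by ring. lra. }
      rewrite Derive_scal.
      rewrite (Derive_refl (fun t => Dl l psi (t, 2 * snd ps - snd q))).
      * simpl. ring.
      * apply (smooth_d1 psi l (2 * fst ps - fst q, 2 * snd ps - snd q) Hs).
    + unfold pd, Defs.d2. simpl fst; simpl snd.
      rewrite (Derive_ext_loc _ (fun t => (-1)^(length l) *
          Dl l psi (2 * fst ps - fst q, 2 * snd ps - t))).
      2:{ assert (Hd : 0 < r/2 - Rabs (snd q - snd ps)) by lra.
          exists (mkposreal _ Hd). intros t Ht.
          change (Rabs (t - snd q) < r/2 - Rabs (snd q - snd ps)) in Ht.
          apply (IH (fst q, t)); simpl; auto.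
          pose proof (Rabs_triang (t - snd q) (snd q - snd ps)).
          replace (t - snd ps) with ((t - snd q) + (snd q - snd ps)) by ring. lra. }
      rewrite Derive_scal.
      rewrite (Derive_refl (fun t => Dl l psi (2 * fst ps - fst q, t))).
      * simpl. ring.
      * apply (smooth_d2 psi l (2 * fst ps - fst q, 2 * snd ps - snd q) Hs).
Qed.

Lemma grad_zero psi ps r (Hs : smooth psi) (Hr : 0 < r)
  (Hsym : forall v, vnorm v <= r -> psi (vadd ps v) = psi (vsub ps v)) :
  Defs.d1 psi ps = 0 /\ Defs.d2 psi ps = 0.
Proof.
  assert (Hb1 : Rabs (fst ps - fst ps) < r/2) by (rewrite Rminus_diag, Rabs_R0; lra).
  assert (Hb2 : Rabs (snd ps - snd ps) < r/2) by (rewrite Rminus_diag, Rabs_R0; lra).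
  assert (E : (2 * fst ps - fst ps, 2 * snd ps - snd ps) = ps) by (destruct ps; simpl; f_equal; ring).
  pose proof (even_Dl psi ps r Hs Hr Hsym (true :: nil) ps Hb1 Hb2) as H1.
  pose proof (even_Dl psi ps r Hs Hr Hsym (false :: nil) ps Hb1 Hb2) as H2.
  rewrite E in H1, H2. cbn [Dl pd length pow] in H1, H2. split; lra.
Qed.

Lemma F_even psi ps r (Hs : smooth psi) (Hr : 0 < r)
  (Hsym : forall v, vnorm v <= r -> psi (vadd ps v) = psi (vsub ps v)) o q :
  Rabs (fst q - fst ps) < r/2 -> Rabs (snd q - snd ps) < r/2 ->
  dot (hess_apply psi q o) o =
  dot (hess_apply psi (2*fst ps - fst q, 2*snd ps - snd q) o) o.
Proof.
  intros Hb1 Hb2.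
  pose proof (even_Dl psi ps r Hs Hr Hsym (true :: true :: nil) q Hb1 Hb2) as H1.
  pose proof (even_Dl psi ps r Hs Hr Hsym (true :: false :: nil) q Hb1 Hb2) as H2.
  pose proof (even_Dl psi ps r Hs Hr Hsym (false :: true :: nil) q Hb1 Hb2) as H3.
  pose proof (even_Dl psi ps r Hs Hr Hsym (false :: false :: nil) q Hb1 Hb2) as H4.
  cbn [Dl pd length pow] in H1, H2, H3, H4.
  unfold dot, hess_apply. cbn [fst snd].
  rewrite H1, H2, H3, H4. ring.
Qed.


Lemma loc_bound_list psi ps (Hs : smooth psi) : forall ls : list (list bool),
  exists rho M, 0 < rho /\ forall l q, In l ls -> Rabs (fst q - fst ps) < rho ->
    Rabs (snd q - snd ps) < rho -> Rabs (Dl l psi q) <= M.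
Proof.
  induction ls as [|l ls IH].
  - exists 1, 0. split. lra. intros l q [].
  - destruct IH as [rho [M [Hrho HM]]].
    destruct (cont_box (Dl l psi) ps (proj2 (Hs l) ps) 1 Rlt_0_1) as [d [Hd Hd']].
    exists (Rmin rho d), (Rmax M (Rabs (Dl l psi ps) + 1)). split.
    + apply Rmin_pos; auto.
    + intros l' q Hin H1 H2.
      pose proof (Rmin_l rho d); pose proof (Rmin_r rho d).
      pose proof (Rmax_l M (Rabs (Dl l psi ps) + 1)); pose proof (Rmax_r M (Rabs (Dl l psi ps) + 1)).
      destruct Hin as [<-|Hin].
      * assert (Rabs (Dl l psi q - Dl l psi ps) < 1). { apply Hd'. idtac. all: eapply Rlt_le_trans; eauto. }
        pose proof (Rabs_triang_inv (Dl l psi q) (Dl l psi ps)). lra.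
      * assert (Rabs (Dl l' psi q) <= M) by (apply HM; auto; lra). lra.
Qed.

Lemma mvt_line (f : R -> R) a b M :
  (forall t, ex_derive f t) ->
  (forall t, Rmin a b <= t <= Rmax a b -> Rabs (Derive f t) <= M) ->
  Rabs (f b - f a) <= M * Rabs (b - a).
Proof.
  intros Hd HM.
  destruct (MVT_gen f a b (Derive f)) as [c [Hc E]].
  - intros x _. apply Derive_correct. auto.
  - intros x _. apply continuity_pt_filterlim. apply (ex_derive_continuous (K := R_AbsRing) (V := R_NormedModule)). auto.
  - rewrite E, Rabs_mult. apply Rmult_le_compat_r. apply Rabs_pos. apply HM. auto.
Qed.

Lemma in_between c rho a b t : Rabs (a - c) < rho -> Rabs (b - c) < rho ->
  Rmin a b <= t <= Rmax a b -> Rabs (t - c) < rho.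
Proof.
  intros Ha Hb Ht. unfold Rmin, Rmax in Ht.
  apply Rabs_def2 in Ha; apply Rabs_def2 in Hb. apply Rabs_def1;
  destruct (Rle_dec a b); lra.
Qed.

Lemma lip_box (g : R * R -> R) c rho M :
  (forall q, ex_derive (fun t => g (t, snd q)) (fst q) /\ ex_derive (fun t => g (fst q, t)) (snd q)) ->
  (forall q, Rabs (fst q - fst c) < rho -> Rabs (snd q - snd c) < rho ->
     Rabs (Derive (fun t => g (t, snd q)) (fst q)) <= M /\
     Rabs (Derive (fun t => g (fst q, t)) (snd q)) <= M) ->
  forall x y, Rabs (fst x - fst c) < rho -> Rabs (snd x - snd c) < rho ->
    Rabs (fst y - fst c) < rho -> Rabs (snd y - snd c) < rho ->
    Rabs (g x - g y) <= M * (Rabs (fst x - fst y) + Rabs (snd x - snd y)).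
Proof.
  intros Hd HM x y Hx1 Hx2 Hy1 Hy2.
  destruct x as [x1 x2]; destruct y as [y1 y2]; simpl in *.
  assert (A1 : Rabs (g (x1, x2) - g (y1, x2)) <= M * Rabs (x1 - y1)).
  { apply (mvt_line (fun t => g (t, x2)) y1 x1 M).
    - intros t. exact (proj1 (Hd (t, x2))).
    - intros t Ht. exact (proj1 (HM (t, x2) (in_between _ _ _ _ _ Hy1 Hx1 Ht) Hx2)). }
  assert (A2 : Rabs (g (y1, x2) - g (y1, y2)) <= M * Rabs (x2 - y2)).
  { apply (mvt_line (fun t => g (y1, t)) y2 x2 M).
    - intros t. exact (proj2 (Hd (y1, t))).
    - intros t Ht. exact (proj2 (HM (y1, t) Hy1 (in_between _ _ _ _ _ Hy2 Hx2 Ht))). }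
  replace (g (x1, x2) - g (y1, y2)) with ((g (x1, x2) - g (y1, x2)) + (g (y1, x2) - g (y1, y2))) by ring.
  eapply Rle_trans. apply Rabs_triang. lra.
Qed.


Lemma posdef_lower (A B C : R) :
  (forall x y, (x, y) <> (0, 0) -> 0 < A * x * x + B * x * y + C * y * y) ->
  exists mu, 0 < mu /\ forall x y, mu * (x * x + y * y) <= A * x * x + B * x * y + C * y * y.
Proof.
  intros H.
  assert (HA : 0 < A) by (pose proof (H 1 0); assert ((1,0) <> (0,0)) by (intro E; injection E; lra); 
    replace (A * 1 * 1 + B * 1 * 0 + C * 0 * 0) with A in * by ring; auto).
  assert (HC : 0 < C) by (pose proof (H 0 1); assert ((0,1) <> (0,0)) by (intro E; injection E; lra); 
    replace (C) with (A * 0 * 0 + B * 0 * 1 + C * 1 * 1) by ring; auto).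
  assert (HD : 0 < 4 * A * C - B * B).
  { assert (Hn : (- B, 2 * A) <> (0,0)) by (intro E; injection E; lra).
    pose proof (H _ _ Hn) as H'.
    assert (0 < A * (4 * A * C - B * B)) by nra.
    apply (Rmult_lt_reg_l A); lra. }
  set (mu := (4 * A * C - B * B) / (4 * (A + C))).
  assert (Hmu : 0 < mu) by (unfold mu; apply Rdiv_lt_0_compat; lra).
  assert (E : mu * (4 * (A + C)) = 4 * A * C - B * B) by (unfold mu; field; lra).
  exists mu. split; auto. intros x y.
  assert (HA' : 0 < A - mu) by nra.
  assert (HK : B * B <= 4 * (A - mu) * (C - mu)) by nra.
  assert (0 <= 4 * (A - mu) * ((A - mu) * x * x + B * x * y + (C - mu) * y * y)).
  { replace (4 * (A - mu) * ((A - mu) * x * x + B * x * y + (C - mu) * y * y))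
      with ((2 * (A - mu) * x + B * y) * (2 * (A - mu) * x + B * y) + (4 * (A - mu) * (C - mu) - B * B) * (y * y)) by ring.
    apply Rplus_le_le_0_compat. apply Rle_0_sqr. apply Rmult_le_pos. lra. apply Rle_0_sqr. }
  assert (0 <= (A - mu) * x * x + B * x * y + (C - mu) * y * y).
  { apply (Rmult_le_reg_l (4 * (A - mu))). lra. lra. }
  nra.
Qed.

Lemma mvt_ex (f : R -> R) a b : (forall t, ex_derive f t) ->
  exists c, Rmin a b <= c <= Rmax a b /\ f b - f a = Derive f c * (b - a).
Proof.
  intros Hd.
  destruct (MVT_gen f a b (Derive f)) as [c [Hc E]].
  - intros x _. apply Derive_correct. auto.
  - intros x _. apply continuity_pt_filterlim. apply (ex_derive_continuous (K := R_AbsRing) (V := R_NormedModule)). auto.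
  - exists c; auto.
Qed.

Lemma err_le e eps X : Rabs e <= eps -> e * X <= eps * Rabs X.
Proof.
  intros H. eapply Rle_trans. apply Rle_abs. rewrite Rabs_mult.
  apply Rmult_le_compat_r. apply Rabs_pos. auto.
Qed.

Lemma abs_prod2 x y : Rabs (x * y) * 2 <= x * x + y * y.
Proof.
  rewrite Rabs_mult. unfold Rabs; destruct (Rcase_abs x); destruct (Rcase_abs y);
  pose proof (Rle_0_sqr (x - y)); pose proof (Rle_0_sqr (x + y)); unfold Rsqr in *; nra.
Qed.

Lemma vnorm_sq v : vnorm v * vnorm v = fst v * fst v + snd v * snd v.
Proof. unfold vnorm, dot. apply sqrt_sqrt. nra. Qed.

Lemma grad_lower psi ps (Hs : smooth psi)
  (Hneg : forall v, v <> (0, 0) -> dot (hess_apply psi ps v) v < 0)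
  (Hz1 : Defs.d1 psi ps = 0) (Hz2 : Defs.d2 psi ps = 0) :
  exists dg mu', 0 < dg /\ 0 < mu' /\ forall p, Rabs (fst p - fst ps) < dg ->
    Rabs (snd p - snd ps) < dg -> mu' * vnorm (vsub p ps) <= vnorm (grad psi p).
Proof.
  set (h11 := Defs.d1 (Defs.d1 psi) ps). set (h12 := Defs.d1 (Defs.d2 psi) ps).
  set (h21 := Defs.d2 (Defs.d1 psi) ps). set (h22 := Defs.d2 (Defs.d2 psi) ps).
  destruct (posdef_lower (- h11) (- (h12 + h21)) (- h22)) as [mu [Hmu Hq]].
  { intros x y Hxy. pose proof (Hneg _ Hxy) as Hn. unfold dot, hess_apply in Hn. simpl in Hn.
    fold h11 h12 h21 h22 in Hn. nra. }
  set (eps := mu / 4).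
  assert (Heps : 0 < eps) by (unfold eps; lra).
  destruct (cont_box _ ps (proj2 (Hs (true :: true :: nil)) ps) eps Heps) as [r11 [Hr11 C11]].
  destruct (cont_box _ ps (proj2 (Hs (true :: false :: nil)) ps) eps Heps) as [r12 [Hr12 C12]].
  destruct (cont_box _ ps (proj2 (Hs (false :: true :: nil)) ps) eps Heps) as [r21 [Hr21 C21]].
  destruct (cont_box _ ps (proj2 (Hs (false :: false :: nil)) ps) eps Heps) as [r22 [Hr22 C22]].
  exists (Rmin (Rmin r11 r12) (Rmin r21 r22)), (mu / 2).
  split. repeat apply Rmin_pos; auto. split. lra.
  intros p Hp1 Hp2.
  pose proof (Rmin_l (Rmin r11 r12) (Rmin r21 r22)); pose proof (Rmin_r (Rmin r11 r12) (Rmin r21 r22)).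
  pose proof (Rmin_l r11 r12); pose proof (Rmin_r r11 r12);
  pose proof (Rmin_l r21 r22); pose proof (Rmin_r r21 r22).
  destruct ps as [s1 s2]; destruct p as [p1 p2]; simpl in *.
  destruct (mvt_ex (fun t => Defs.d1 psi (t, p2)) s1 p1) as [c1 [Hc1 E1]].
  { intros t. exact (smooth_d1 psi (true :: nil) (t, p2) Hs). }
  destruct (mvt_ex (fun t => Defs.d1 psi (s1, t)) s2 p2) as [c2 [Hc2 E2]].
  { intros t. exact (smooth_d2 psi (true :: nil) (s1, t) Hs). }
  destruct (mvt_ex (fun t => Defs.d2 psi (t, p2)) s1 p1) as [c3 [Hc3 E3]].
  { intros t. exact (smooth_d1 psi (false :: nil) (t, p2) Hs). }
  destruct (mvt_ex (fun t => Defs.d2 psi (s1, t)) s2 p2) as [c4 [Hc4 E4]].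
  { intros t. exact (smooth_d2 psi (false :: nil) (s1, t) Hs). }
  assert (B0 : Rabs (s1 - s1) < Rmin (Rmin r11 r12) (Rmin r21 r22)) by (rewrite Rminus_diag, Rabs_R0; repeat apply Rmin_pos; auto).
  assert (B0' : Rabs (s2 - s2) < Rmin (Rmin r11 r12) (Rmin r21 r22)) by (rewrite Rminus_diag, Rabs_R0; repeat apply Rmin_pos; auto).
  pose proof (in_between _ _ _ _ _ B0 Hp1 Hc1) as I1.
  pose proof (in_between _ _ _ _ _ B0' Hp2 Hc2) as I2.
  pose proof (in_between _ _ _ _ _ B0 Hp1 Hc3) as I3.
  pose proof (in_between _ _ _ _ _ B0' Hp2 Hc4) as I4.
  assert (e11 : Rabs (Defs.d1 (Defs.d1 psi) (c1, p2) - h11) < eps) by (apply (C11 (c1, p2)); simpl; lra).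
  assert (e21 : Rabs (Defs.d2 (Defs.d1 psi) (s1, c2) - h21) < eps) by (apply (C21 (s1, c2)); simpl; lra).
  assert (e12 : Rabs (Defs.d1 (Defs.d2 psi) (c3, p2) - h12) < eps) by (apply (C12 (c3, p2)); simpl; lra).
  assert (e22 : Rabs (Defs.d2 (Defs.d2 psi) (s1, c4) - h22) < eps) by (apply (C22 (s1, c4)); simpl; lra).
  change (Derive (fun t => Defs.d1 psi (t, p2)) c1) with (Defs.d1 (Defs.d1 psi) (c1, p2)) in E1.
  change (Derive (fun t => Defs.d1 psi (s1, t)) c2) with (Defs.d2 (Defs.d1 psi) (s1, c2)) in E2.
  change (Derive (fun t => Defs.d2 psi (t, p2)) c3) with (Defs.d1 (Defs.d2 psi) (c3, p2)) in E3.
  change (Derive (fun t => Defs.d2 psi (s1, t)) c4) with (Defs.d2 (Defs.d2 psi) (s1, c4)) in E4.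
  simpl in E1, E2, E3, E4.
  set (a11 := Defs.d1 (Defs.d1 psi) (c1, p2)) in *.
  set (a21 := Defs.d2 (Defs.d1 psi) (s1, c2)) in *.
  set (a12 := Defs.d1 (Defs.d2 psi) (c3, p2)) in *.
  set (a22 := Defs.d2 (Defs.d2 psi) (s1, c4)) in *.
  set (x := p1 - s1) in *. set (y := p2 - s2) in *.
  assert (G1 : Defs.d1 psi (p1, p2) = a11 * x + a21 * y) by lra.
  assert (G2 : Defs.d2 psi (p1, p2) = a12 * x + a22 * y) by lra.
  pose proof (err_le _ _ (x * x) (Rlt_le _ _ e11)).
  pose proof (err_le _ _ (x * y) (Rlt_le _ _ e21)).
  pose proof (err_le _ _ (x * y) (Rlt_le _ _ e12)).
  pose proof (err_le _ _ (y * y) (Rlt_le _ _ e22)).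
  assert (Rabs (x * x) = x * x) by (apply Rabs_right; nra).
  assert (Rabs (y * y) = y * y) by (apply Rabs_right; nra).
  pose proof (abs_prod2 x y).
  pose proof (Hq x y).
  assert (Key : mu / 2 * (x * x + y * y) <= - (Defs.d1 psi (p1, p2) * x + Defs.d2 psi (p1, p2) * y)).
  { rewrite G1, G2. unfold eps in *. nra. }
  set (g := grad psi (p1, p2)).
  assert (Hcs := dot_cs g (vsub (p1, p2) (s1, s2))).
  unfold dot in Hcs. unfold g, grad, vsub in Hcs. simpl in Hcs. fold x y in Hcs.
  pose proof (vnorm_sq (vsub (p1, p2) (s1, s2))) as Hn. unfold vsub in Hn. simpl in Hn. fold x y in Hn.
  pose proof (Rle_abs (- (Defs.d1 psi (p1, p2) * x + Defs.d2 psi (p1, p2) * y))).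
  rewrite Rabs_Ropp in *.
  change (mu / 2 * vnorm (x, y) <= vnorm (Defs.d1 psi (p1, p2), Defs.d2 psi (p1, p2))).
  set (N := vnorm (x, y)) in *.
  set (Ng := vnorm (Defs.d1 psi (p1, p2), Defs.d2 psi (p1, p2))) in *.
  assert (0 <= N) by apply vnorm_pos.
  assert (0 <= Ng) by apply vnorm_pos.
  destruct (Req_dec N 0) as [HN|HN].
  - rewrite HN. lra.
  - apply (Rmult_le_reg_r N). lra. nra.
Qed.


Lemma abs_mul_le a u B : Rabs a <= B -> Rabs u <= 1 -> Rabs (a * u) <= B.
Proof.
  intros Ha Hu. rewrite Rabs_mult. pose proof (Rabs_pos a); pose proof (Rabs_pos u). nra.
Qed.

Lemma abs4 a b c d u v w z B : Rabs a <= B -> Rabs b <= B -> Rabs c <= B -> Rabs d <= B ->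
  Rabs u <= 1 -> Rabs v <= 1 -> Rabs w <= 1 -> Rabs z <= 1 ->
  Rabs (a * u + b * v + c * w + d * z) <= 4 * B.
Proof.
  intros.
  pose proof (abs_mul_le a u B); pose proof (abs_mul_le b v B);
  pose proof (abs_mul_le c w B); pose proof (abs_mul_le d z B).
  pose proof (Rabs_triang (a * u + b * v + c * w) (d * z)).
  pose proof (Rabs_triang (a * u + b * v) (c * w)).
  pose proof (Rabs_triang (a * u) (b * v)). lra.
Qed.

Lemma o_bounds o : vnorm o = 1 -> Rabs (fst o) <= 1 /\ Rabs (snd o) <= 1.
Proof. intros H. rewrite <- H. split; [apply abs_le_vnorm1 | apply abs_le_vnorm2]. Qed.

Lemma oo_bound a b : Rabs a <= 1 -> Rabs b <= 1 -> Rabs (a * b) <= 1.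
Proof. intros. replace 1 with (1 * 1) by ring. rewrite Rabs_mult. pose proof (Rabs_pos a); pose proof (Rabs_pos b). nra. Qed.

Definition L3 : list (list bool) := (true :: true :: true :: nil) :: (true :: true :: false :: nil) ::
     (true :: false :: true :: nil) :: (true :: false :: false :: nil) ::
     (false :: true :: true :: nil) :: (false :: true :: false :: nil) ::
     (false :: false :: true :: nil) :: (false :: false :: false :: nil) :: nil.

Lemma F_lip psi ps (Hs : smooth psi) : exists rho K, 0 < rho /\ 0 <= K /\
  forall o x y, vnorm o = 1 ->
    Rabs (fst x - fst ps) < rho -> Rabs (snd x - snd ps) < rho ->
    Rabs (fst y - fst ps) < rho -> Rabs (snd y - snd ps) < rho ->
    Rabs (dot (hess_apply psi x o) o - dot (hess_apply psi y o) o) <=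
      K * (Rabs (fst x - fst y) + Rabs (snd x - snd y)).
Proof.
  destruct (loc_bound_list psi ps Hs L3)
    as [rho [M [Hrho HM]]].
  set (M' := Rmax 0 M).
  assert (HM' : forall l q, In l L3 -> Rabs (fst q - fst ps) < rho -> Rabs (snd q - snd ps) < rho -> Rabs (Dl l psi q) <= M').
  { intros. eapply Rle_trans. eapply HM; eauto. apply Rmax_r. }
  clear HM.
  exists rho, (4 * M'). split; auto. split. pose proof (Rmax_l 0 M). fold M' in H. lra.
  intros o x y Ho Hx1 Hx2 Hy1 Hy2.
  assert (Lip : forall i j, In (true :: i :: j :: nil) L3 ->
     In (false :: i :: j :: nil) L3 ->
    Rabs (Dl (i :: j :: nil) psi x - Dl (i :: j :: nil) psi y) <=
      M' * (Rabs (fst x - fst y) + Rabs (snd x - snd y))).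
  { intros i j Hi1 Hi2. apply (lip_box (Dl (i :: j :: nil) psi) ps rho M'); auto.
    - intros q. split; [apply (smooth_d1 psi _ q Hs) | apply (smooth_d2 psi _ q Hs)].
    - intros q Hq1 Hq2. split.
      + exact (HM' (true :: i :: j :: nil) q Hi1 Hq1 Hq2).
      + exact (HM' (false :: i :: j :: nil) q Hi2 Hq1 Hq2). }
  pose proof (Lip true true ltac:(unfold L3; simpl; tauto) ltac:(unfold L3; simpl; tauto)) as L11.
  pose proof (Lip true false ltac:(unfold L3; simpl; tauto) ltac:(unfold L3; simpl; tauto)) as L12.
  pose proof (Lip false true ltac:(unfold L3; simpl; tauto) ltac:(unfold L3; simpl; tauto)) as L21.
  pose proof (Lip false false ltac:(unfold L3; simpl; tauto) ltac:(unfold L3; simpl; tauto)) as L22.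
  cbn [Dl pd] in L11, L12, L21, L22.
  destruct (o_bounds o Ho) as [Ho1 Ho2].
  unfold dot, hess_apply. cbn [fst snd].
  replace ((Defs.d1 (Defs.d1 psi) x * fst o + Defs.d1 (Defs.d2 psi) x * snd o) * fst o +
   (Defs.d2 (Defs.d1 psi) x * fst o + Defs.d2 (Defs.d2 psi) x * snd o) * snd o -
   ((Defs.d1 (Defs.d1 psi) y * fst o + Defs.d1 (Defs.d2 psi) y * snd o) * fst o +
    (Defs.d2 (Defs.d1 psi) y * fst o + Defs.d2 (Defs.d2 psi) y * snd o) * snd o))
  with ((Defs.d1 (Defs.d1 psi) x - Defs.d1 (Defs.d1 psi) y) * (fst o * fst o) +
        (Defs.d1 (Defs.d2 psi) x - Defs.d1 (Defs.d2 psi) y) * (snd o * fst o) +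
        (Defs.d2 (Defs.d1 psi) x - Defs.d2 (Defs.d1 psi) y) * (fst o * snd o) +
        (Defs.d2 (Defs.d2 psi) x - Defs.d2 (Defs.d2 psi) y) * (snd o * snd o)) by ring.
  replace (4 * M' * (Rabs (fst x - fst y) + Rabs (snd x - snd y))) with
    (4 * (M' * (Rabs (fst x - fst y) + Rabs (snd x - snd y)))) by ring.
  apply abs4; auto; apply oo_bound; auto.
Qed.


Definition N1 psi q := Rabs (Defs.d1 psi q) + Rabs (Defs.d2 psi q).

Lemma grad_lower_compact psi ps (Hs : smooth psi)
  (H5 : forall p, p <> ps -> grad psi p <> (0, 0)) dl Rr (Hdl : 0 < dl) (HR : 0 < Rr) :
  exists m, 0 < m /\ forall p, vnorm (vsub p ps) <= Rr ->
    ~ (Rabs (fst p - fst ps) < dl /\ Rabs (snd p - snd ps) < dl) -> m <= N1 psi p.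
Proof.
  set (P := fun u v (D : posreal) =>
    ((u, v) = ps /\ D <= dl) \/
    ((u, v) <> ps /\ D <= N1 psi (u, v) / 2 /\
      forall q, Rabs (fst q - u) < D -> Rabs (snd q - v) < D -> N1 psi (u, v) / 2 <= N1 psi q)).
  assert (Hex : forall u v, exists D : posreal, P u v D).
  { intros u v. destruct (classic ((u, v) = ps)) as [E|E].
    - exists (mkposreal dl Hdl). left. split; auto. simpl; lra.
    - assert (HN : 0 < N1 psi (u, v)).
      { unfold N1. pose proof (Rabs_pos (Defs.d1 psi (u, v))); pose proof (Rabs_pos (Defs.d2 psi (u, v))).
        destruct (Req_dec (Rabs (Defs.d1 psi (u, v)) + Rabs (Defs.d2 psi (u, v))) 0) as [Z|Z]; [|lra].
        exfalso. apply (H5 _ E). unfold grad.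
        assert (Rabs (Defs.d1 psi (u, v)) = 0) by lra. assert (Rabs (Defs.d2 psi (u, v)) = 0) by lra.
        f_equal; apply Rabs_eq_0; auto. }
      assert (He : 0 < N1 psi (u, v) / 4) by lra.
      destruct (cont_box _ (u, v) (proj2 (Hs (true :: nil)) (u, v)) _ He) as [ra [Hra Ca]].
      destruct (cont_box _ (u, v) (proj2 (Hs (false :: nil)) (u, v)) _ He) as [rb [Hrb Cb]].
      assert (HD : 0 < Rmin (Rmin ra rb) (N1 psi (u, v) / 2)) by (repeat apply Rmin_pos; lra).
      exists (mkposreal _ HD). right. simpl. split; auto. split. apply Rmin_r.
      intros q H1 H2.
      pose proof (Rmin_l (Rmin ra rb) (N1 psi (u, v) / 2)). pose proof (Rmin_l ra rb). pose proof (Rmin_r ra rb).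
      assert (A1 : Rabs (Dl (true :: nil) psi q - Dl (true :: nil) psi (u, v)) < N1 psi (u, v) / 4) by (apply Ca; simpl; lra).
      assert (A2 : Rabs (Dl (false :: nil) psi q - Dl (false :: nil) psi (u, v)) < N1 psi (u, v) / 4) by (apply Cb; simpl; lra).
      cbn [Dl pd] in A1, A2.
      pose proof (Rabs_triang_inv (Defs.d1 psi (u, v)) (Defs.d1 psi (u, v) - Defs.d1 psi q)).
      pose proof (Rabs_triang_inv (Defs.d2 psi (u, v)) (Defs.d2 psi (u, v) - Defs.d2 psi q)).
      rewrite Rabs_minus_sym in A1, A2.
      replace (Defs.d1 psi (u, v) - (Defs.d1 psi (u, v) - Defs.d1 psi q)) with (Defs.d1 psi q) in * by ring.
      replace (Defs.d2 psi (u, v) - (Defs.d2 psi (u, v) - Defs.d2 psi q)) with (Defs.d2 psi q) in * by ring.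
      unfold N1 in *. lra. }
  set (delta := fun u v => proj1_sig (constructive_indefinite_description _ (Hex u v))).
  assert (Hdelta : forall u v, P u v (delta u v)) by (intros u v; unfold delta; apply proj2_sig).
  destruct (compactness_value_2d (fst ps - Rr) (fst ps + Rr) (snd ps - Rr) (snd ps + Rr) delta) as [d Hd].
  exists d. split. apply cond_pos.
  intros [p1 p2] Hp Hnb.
  pose proof (abs_le_vnorm1 (vsub (p1, p2) ps)) as B1.
  pose proof (abs_le_vnorm2 (vsub (p1, p2) ps)) as B2.
  unfold vsub in B1, B2. simpl in B1, B2.
  apply Rabs_le_between' in B1. apply Rabs_le_between' in B2.
  apply Rnot_lt_le. intros Hlt.
  unfold vsub in Hp; simpl in Hp. apply (Hd p1 p2). split; lra. split; lra.
  intros [u [v [_ [_ [Hx [Hy Hdd]]]]]].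
  destruct (Hdelta u v) as [[E Hle]|[E [Hle Hq]]].
  - apply Hnb. rewrite <- E. simpl. split; lra.
  - pose proof (Hq (p1, p2) Hx Hy). lra.
Qed.


Lemma vnorm_scal t o : vnorm (vscal t o) = Rabs t * vnorm o.
Proof.
  unfold vnorm, vscal, dot. simpl.
  replace (t * fst o * (t * fst o) + t * snd o * (t * snd o)) with ((t * t) * (fst o * fst o + snd o * snd o)) by ring.
  rewrite sqrt_mult_alt by nra. f_equal. rewrite <- sqrt_Rsqr_abs. reflexivity.
Qed.

Lemma key psi ps (Hs : smooth psi) (Hcond : conditions psi ps) :
  exists T kappa, 0 < T /\ 0 < kappa /\ forall p o t, vnorm o = 1 -> Rabs t <= T ->
    Rabs (dot (hess_apply psi (vadd p (vscal t o)) o) o -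
          dot (hess_apply psi (vadd p (vscal (- t) o)) o) o) <= kappa * vnorm (grad psi p).
Proof.
  destruct Hcond as [H1 [H2 [[r1 [Hr1 Hsym]] [[c1 [Hc1 H4]] [H5 [H6 [c2 [r2 [r3 [Hc2 [Hr2 [Hr3 H7]]]]]]]]]]]].
  destruct (grad_zero psi ps r1 Hs Hr1 Hsym) as [Hz1 Hz2].
  destruct (grad_lower psi ps Hs H2 Hz1 Hz2) as [dg [mu [Hdg [Hmu Hgl]]]].
  destruct (F_lip psi ps Hs) as [rho [K [Hrho [HK Hlip]]]].
  set (dC := Rmin (Rmin (r1 / 2) rho) dg / 2).
  assert (HdC : 0 < dC) by (unfold dC; assert (0 < Rmin (Rmin (r1 / 2) rho) dg) by (repeat apply Rmin_pos; lra); lra).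
  assert (HdC1 : 2 * dC <= r1 / 2) by (unfold dC; pose proof (Rmin_l (Rmin (r1 / 2) rho) dg); pose proof (Rmin_l (r1/2) rho); lra).
  assert (HdC2 : 2 * dC <= rho) by (unfold dC; pose proof (Rmin_l (Rmin (r1 / 2) rho) dg); pose proof (Rmin_r (r1/2) rho); lra).
  assert (HdC3 : 2 * dC <= dg) by (unfold dC; pose proof (Rmin_r (Rmin (r1 / 2) rho) dg); lra).
  destruct (grad_lower_compact psi ps Hs H5 dC r2 HdC Hr2) as [m [Hm Hcomp]].
  exists (Rmin r3 dC), (2 * c2 + 4 * c1 / m + 4 * K / mu).
  assert (0 <= 4 * c1 / m) by (apply Rdiv_le_0_compat; lra).
  assert (0 <= 4 * K / mu) by (apply Rdiv_le_0_compat; lra).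
  split. apply Rmin_pos; lra. split. lra.
  intros p o t Ho Ht.
  pose proof (Rmin_l r3 dC); pose proof (Rmin_r r3 dC).
  set (g := grad psi p).
  assert (Hg0 : 0 <= vnorm g) by apply vnorm_pos.
  destruct (o_bounds o Ho) as [Ho1 Ho2].
  assert (Hto1 : Rabs (t * fst o) <= Rabs t) by (rewrite Rabs_mult; pose proof (Rabs_pos t); nra).
  assert (Hto2 : Rabs (t * snd o) <= Rabs t) by (rewrite Rabs_mult; pose proof (Rabs_pos t); nra).
  destruct (classic (Rabs (fst p - fst ps) < dC /\ Rabs (snd p - snd ps) < dC)) as [[Hb1 Hb2]|Hnb].
  -
    set (d1 := fst p - fst ps) in *. set (d2 := snd p - snd ps) in *.
    set (a1 := t * fst o) in *. set (a2 := t * snd o) in *.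
    assert (Hs1 : forall u v A B, Rabs u < A -> Rabs v <= B -> Rabs (u + v) < A + B).
    { intros u v A B Hu Hv. pose proof (Rabs_triang u v). lra. }
    assert (Hs2 : forall u v A B, Rabs u < A -> Rabs v <= B -> Rabs (u - v) < A + B).
    { intros u v A B Hu Hv. pose proof (Rabs_triang u (- v)). rewrite Rabs_Ropp in *. unfold Rminus. lra. }
    assert (Hs3 : forall u v A B, Rabs u < A -> Rabs v <= B -> Rabs (- u + v) < A + B).
    { intros u v A B Hu Hv. pose proof (Rabs_triang (- u) v). rewrite Rabs_Ropp in *. lra. }
    assert (HtdC : Rabs t <= dC) by lra.
    rewrite (F_even psi ps r1 Hs Hr1 Hsym o (vadd p (vscal (- t) o))).
    2:{ unfold vadd, vscal; simpl. replace (fst p + - t * fst o - fst ps) with (d1 - a1) by (unfold d1, a1; ring).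
        pose proof (Hs2 d1 a1 dC dC Hb1 ltac:(lra)). lra. }
    2:{ unfold vadd, vscal; simpl. replace (snd p + - t * snd o - snd ps) with (d2 - a2) by (unfold d2, a2; ring).
        pose proof (Hs2 d2 a2 dC dC Hb2 ltac:(lra)). lra. }
    eapply Rle_trans. apply Hlip; auto.
    + unfold vadd, vscal; simpl. replace (fst p + t * fst o - fst ps) with (d1 + a1) by (unfold d1, a1; ring).
      pose proof (Hs1 d1 a1 dC dC Hb1 ltac:(lra)). lra.
    + unfold vadd, vscal; simpl. replace (snd p + t * snd o - snd ps) with (d2 + a2) by (unfold d2, a2; ring).
      pose proof (Hs1 d2 a2 dC dC Hb2 ltac:(lra)). lra.
    + unfold vadd, vscal; simpl. replace (2 * fst ps - (fst p + - t * fst o) - fst ps) with (- d1 + a1) by (unfold d1, a1; ring).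
      pose proof (Hs3 d1 a1 dC dC Hb1 ltac:(lra)). lra.
    + unfold vadd, vscal; simpl. replace (2 * snd ps - (snd p + - t * snd o) - snd ps) with (- d2 + a2) by (unfold d2, a2; ring).
      pose proof (Hs3 d2 a2 dC dC Hb2 ltac:(lra)). lra.
    + unfold vadd, vscal; simpl.
      replace (fst p + t * fst o - (2 * fst ps - (fst p + - t * fst o))) with (2 * d1) by (unfold d1; ring).
      replace (snd p + t * snd o - (2 * snd ps - (snd p + - t * snd o))) with (2 * d2) by (unfold d2; ring).
      rewrite !Rabs_mult, (Rabs_right 2) by lra.
      pose proof (abs_le_vnorm1 (vsub p ps)) as V1. pose proof (abs_le_vnorm2 (vsub p ps)) as V2.
      change (fst (vsub p ps)) with d1 in V1. change (snd (vsub p ps)) with d2 in V2.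
      assert (HG : mu * vnorm (vsub p ps) <= vnorm g) by (apply Hgl; [change (Rabs d1 < dg) | change (Rabs d2 < dg)]; lra).
      assert (HN : vnorm (vsub p ps) <= vnorm g / mu).
      { apply (Rmult_le_reg_l mu). lra. field_simplify; lra. }
      assert (K * (2 * Rabs d1 + 2 * Rabs d2) <= 4 * K * vnorm (vsub p ps)) by nra.
      assert (4 * K * vnorm (vsub p ps) <= 4 * K / mu * vnorm g).
      { replace (4 * K / mu * vnorm g) with (4 * K * (vnorm g / mu)) by (field; lra). nra. }
      assert (4 * K / mu * vnorm g <= (2 * c2 + 4 * c1 / m + 4 * K / mu) * vnorm g) by nra.
      lra.
  - assert (Htri : forall u v, Rabs (u - v) <= Rabs u + Rabs v).
    { intros u v. pose proof (Rabs_triang u (- v)). rewrite Rabs_Ropp in *. unfold Rminus. lra. }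
    eapply Rle_trans. apply Htri.
    destruct (Rlt_or_le (vnorm (vsub p ps)) r2) as [Hlt|Hge].
    + pose proof (F_le_opnorm psi (vadd p (vscal t o)) o c1 Ho (H4 _)) as F1.
      pose proof (F_le_opnorm psi (vadd p (vscal (- t) o)) o c1 Ho (H4 _)) as F2.
      pose proof (Hcomp p (Rlt_le _ _ Hlt) Hnb) as Hmn.
      pose proof (abs_le_vnorm1 g) as V1. pose proof (abs_le_vnorm2 g) as V2.
      unfold N1 in Hmn. change (fst g) with (Defs.d1 psi p) in V1. change (snd g) with (Defs.d2 psi p) in V2.
      assert (Hgm : m / 2 <= vnorm g) by lra.
      assert (2 * c1 <= 4 * c1 / m * vnorm g).
      { apply (Rle_trans _ (4 * c1 / m * (m / 2))).
        right. field. lra. apply Rmult_le_compat_l; lra. }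
      assert (4 * c1 / m * vnorm g <= (2 * c2 + 4 * c1 / m + 4 * K / mu) * vnorm g) by nra.
      lra.
    + assert (Hv1 : vnorm (vscal t o) <= r3) by (rewrite vnorm_scal, Ho; lra).
      assert (Hv2 : vnorm (vscal (- t) o) <= r3) by (rewrite vnorm_scal, Ho, Rabs_Ropp; lra).
      pose proof (F_le_opnorm psi _ o _ Ho (H7 p _ (Rle_ge _ _ Hge) Hv1)) as F1.
      pose proof (F_le_opnorm psi _ o _ Ho (H7 p _ (Rle_ge _ _ Hge) Hv2)) as F2.
      fold g in F1, F2.
      assert (2 * c2 * vnorm g <= (2 * c2 + 4 * c1 / m + 4 * K / mu) * vnorm g) by nra.
      lra.
Qed.


Lemma cont2d_of_cont (h : R * R -> R) x y : continuous h (x, y) ->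
  continuity_2d_pt (fun a b => h (a, b)) x y.
Proof.
  intros Hc eps. destruct (cont_box h (x, y) Hc eps (cond_pos eps)) as [d [Hd Hd']].
  exists (mkposreal d Hd). intros u v Hu Hv. apply (Hd' (u, v)); auto.
Qed.

Lemma comp2d (G : R -> R -> R) (u v : R -> R -> R) x y :
  continuity_2d_pt G (u x y) (v x y) -> continuity_2d_pt u x y -> continuity_2d_pt v x y ->
  continuity_2d_pt (fun a b => G (u a b) (v a b)) x y.
Proof.
  intros HG Hu Hv eps. destruct (HG eps) as [d Hd].
  destruct (Hu d) as [du Hdu]. destruct (Hv d) as [dv Hdv].
  assert (Hm : 0 < Rmin du dv) by (apply Rmin_pos; apply cond_pos).
  exists (mkposreal _ Hm). simpl. intros a b Ha Hb.
  pose proof (Rmin_l du dv); pose proof (Rmin_r du dv).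
  apply Hd. apply Hdu; lra. apply Hdv; lra.
Qed.

Lemma cont2d_snd (g : R -> R -> R) x y : continuity_2d_pt g x y -> continuous (g x) y.
Proof.
  intros Hc. apply filterlim_locally. intros eps.
  destruct (Hc eps) as [d Hd]. exists d. intros z Hz.
  change (Rabs (g x z - g x y) < eps). apply Hd.
  rewrite Rminus_diag, Rabs_R0. apply cond_pos. exact Hz.
Qed.

Lemma inner_ex (g : R -> R -> R) t : (forall x y, continuity_2d_pt g x y) ->
  ex_RInt (g t) 0 1.
Proof.
  intros Hc. apply (ex_RInt_continuous (V := R_CompleteNormedModule)). intros z _. apply cont2d_snd. auto.
Qed.

Lemma param_cont (g : R -> R -> R) : (forall x y, continuity_2d_pt g x y) ->
  forall t0, continuous (fun t => RInt (g t) 0 1) t0.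
Proof.
  intros Hc t0. apply filterlim_locally. intros eps.
  assert (He : 0 < eps / 2) by (pose proof (cond_pos eps); lra).
  destruct (uniform_continuity_2d g (t0 - 1) (t0 + 1) 0 1 (fun x y _ _ => Hc x y) (mkposreal _ He)) as [d Hd].
  assert (Hm : 0 < Rmin d 1) by (apply Rmin_pos; [apply cond_pos | lra]).
  exists (mkposreal _ Hm). intros t Ht.
  change (Rabs (t - t0) < Rmin d 1) in Ht.
  change (Rabs (RInt (g t) 0 1 - RInt (g t0) 0 1) < eps).
  pose proof (Rmin_l d 1); pose proof (Rmin_r d 1).
  assert (E : RInt (fun s => g t s - g t0 s) 0 1 = RInt (g t) 0 1 - RInt (g t0) 0 1).
  { exact (RInt_minus (V := R_CompleteNormedModule) (g t) (g t0) 0 1 (inner_ex g t Hc) (inner_ex g t0 Hc)). }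
  rewrite <- E.
  eapply Rle_lt_trans. apply (abs_RInt_le_const _ 0 1 (eps / 2)). lra.
  exact (ex_RInt_minus (V := R_NormedModule) (g t) (g t0) 0 1 (inner_ex g t Hc) (inner_ex g t0 Hc)).
  intros s Hs. apply Rlt_le.
  pose proof Ht as Ht2. apply Rabs_def2 in Ht2.
  apply (Hd t0 s t s); try lra. replace (s - s) with 0 by ring. rewrite Rabs_R0. apply cond_pos.
  simpl. pose proof (cond_pos eps). lra.
Qed.

Lemma refl_RInt (f : R -> R) L : ex_RInt f 0 L ->
  RInt (fun y => f (L - y)) 0 L = RInt f 0 L.
Proof.
  intros Hex. apply is_RInt_unique.
  pose proof (RInt_correct f 0 L Hex) as H.
  apply (is_RInt_swap (V := R_NormedModule)) in H.
  assert (H' : is_RInt f (-1 * 0 + L) (-1 * L + L) (opp (RInt f 0 L))).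
  { replace (-1 * 0 + L) with L by ring. replace (-1 * L + L) with 0 by ring. exact H. }
  apply (is_RInt_comp_lin (V := R_NormedModule)) in H'.
  apply (is_RInt_scal (V := R_NormedModule) _ _ _ (-1)) in H'.
  replace (RInt f 0 L) with (scal (-1) (opp (RInt f 0 L))).
  2:{ change (-1 * - RInt f 0 L = RInt f 0 L). ring. }
  eapply is_RInt_ext. 2: exact H'.
  intros x _. change (-1 * (-1 * f (-1 * x + L)) = f (L - x)).
  replace (-1 * x + L) with (L - x) by ring. ring.
Qed.


Definition gint psi alpha c (w : nat) p o a := fun tau s =>
  (1 - s) * (alpha * sin (INR w * tau)) ^ 2 * (c * sin (INR w * tau)) *
  dot (hess_apply psi (vadd p (vscal (a * s * (alpha * sin (INR w * tau))) o)) o) o.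

Lemma cont2d_pow2 f x y : continuity_2d_pt f x y -> continuity_2d_pt (fun a b => (f a b) ^ 2) x y.
Proof.
  intros H. apply (continuity_2d_pt_ext (fun a b => f a b * f a b)). intros; ring.
  apply continuity_2d_pt_mult; auto.
Qed.

Lemma cont2d_sin (w : nat) x y : continuity_2d_pt (fun a b => sin (INR w * a)) x y.
Proof.
  apply (continuity_1d_2d_pt_comp sin (fun a b => INR w * a)). apply continuity_sin.
  apply continuity_2d_pt_mult. apply continuity_2d_pt_const. apply continuity_2d_pt_id1.
Qed.

Lemma F2_cont psi o (Hs : smooth psi) X Y :
  continuity_2d_pt (fun a b => dot (hess_apply psi (a, b) o) o) X Y.
Proof.
  unfold dot, hess_apply. cbn [fst snd].
  repeat first [apply continuity_2d_pt_plus | apply continuity_2d_pt_mult | apply continuity_2d_pt_const].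
  - exact (cont2d_of_cont _ X Y (proj2 (Hs (true :: true :: nil)) (X, Y))).
  - exact (cont2d_of_cont _ X Y (proj2 (Hs (true :: false :: nil)) (X, Y))).
  - exact (cont2d_of_cont _ X Y (proj2 (Hs (false :: true :: nil)) (X, Y))).
  - exact (cont2d_of_cont _ X Y (proj2 (Hs (false :: false :: nil)) (X, Y))).
Qed.

Lemma gint_cont psi alpha c w p o a (Hs : smooth psi) :
  forall x y, continuity_2d_pt (gint psi alpha c w p o a) x y.
Proof.
  intros x y. unfold gint.
  apply continuity_2d_pt_mult.
  - repeat first [apply cont2d_sin | apply continuity_2d_pt_mult | apply continuity_2d_pt_minus
      | apply cont2d_pow2 | apply continuity_2d_pt_const | apply continuity_2d_pt_id2 ].
  - apply (comp2d (fun a b => dot (hess_apply psi (a, b) o) o)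
      (fun tau s => fst p + a * s * (alpha * sin (INR w * tau)) * fst o)
      (fun tau s => snd p + a * s * (alpha * sin (INR w * tau)) * snd o)).
    + apply F2_cont; auto.
    + repeat first [apply cont2d_sin | apply continuity_2d_pt_mult | apply continuity_2d_pt_plus
      | apply continuity_2d_pt_const | apply continuity_2d_pt_id2 ].
    + repeat first [apply cont2d_sin | apply continuity_2d_pt_mult | apply continuity_2d_pt_plus
      | apply continuity_2d_pt_const | apply continuity_2d_pt_id2 ].
Qed.

Lemma sin_refl (w : nat) tau : sin (INR w * (2 * PI - tau)) = - sin (INR w * tau).
Proof.
  replace (INR w * (2 * PI - tau)) with (- (INR w * tau) + 2 * INR w * PI) by ring.
  rewrite sin_period, sin_neg. reflexivity.
Qed.

Lemma abs_sin_le x : Rabs (sin x) <= 1.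
Proof. apply Rabs_le. apply SIN_bound. Qed.

Lemma coef_bound alpha c s S : 0 < alpha -> 0 < c -> 0 <= s <= 1 -> Rabs S <= 1 ->
  Rabs ((1 - s) * (alpha * S) ^ 2 * (c * S)) <= alpha ^ 2 * c.
Proof.
  intros Ha Hc Hs HS.
  rewrite !Rabs_mult, <- RPow_abs, Rabs_mult.
  rewrite (Rabs_right (1 - s)) by lra. rewrite (Rabs_right alpha) by lra. rewrite (Rabs_right c) by lra.
  pose proof (Rabs_pos S). simpl.
  assert (0 <= Rabs S * Rabs S <= 1) by (split; nra).
  assert (0 <= alpha * alpha) by nra.
  assert ((1 - s) * (alpha * Rabs S * (alpha * Rabs S * 1)) <= alpha * alpha) by nra.
  assert (c * Rabs S <= c) by nra.
  assert (0 <= (1 - s) * (alpha * Rabs S * (alpha * Rabs S * 1))) by (apply Rmult_le_pos; nra).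
  nra.
Qed.

Theorem lemma3 (psi : R * R -> R) (ps : R * R)
  (Hsmooth : smooth psi) (Hcond : conditions psi ps)
  (alpha c : R) (w : nat) (Halpha : 0 < alpha) (Hc : 0 < c) :
  exists a0 kappa : R, 0 < a0 /\ 0 < kappa /\
    forall (a : R) (p o : R * R), 0 <= a <= a0 -> vnorm o = 1 ->
      Rabs (phi psi alpha c w a p o) <= kappa * vnorm (grad psi p).
Proof.
  destruct (key psi ps Hsmooth Hcond) as [T [kap [HT [Hk Hkey]]]].
  exists (T / alpha), (alpha ^ 2 * c * kap / 2).
  split. apply Rdiv_lt_0_compat; lra. split. assert (0 < alpha ^ 2) by (apply pow_lt; lra). 
  assert (0 < alpha ^ 2 * c * kap) by (repeat apply Rmult_lt_0_compat; lra). lra.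
  intros a p o Ha Ho.
  change (phi psi alpha c w a p o) with
    (/ (2 * PI) * RInt (fun tau => RInt (gint psi alpha c w p o a tau) 0 1) 0 (2 * PI)).
  set (Ia := fun b tau => RInt (gint psi alpha c w p o b tau) 0 1).
  change (fun tau => RInt (gint psi alpha c w p o a tau) 0 1) with (Ia a).
  assert (HexI : forall b tau, ex_RInt (gint psi alpha c w p o b tau) 0 1).
  { intros b tau. apply inner_ex. apply gint_cont; auto. }
  assert (HexO : forall b, ex_RInt (Ia b) 0 (2 * PI)).
  { intros b. apply (ex_RInt_continuous (V := R_CompleteNormedModule)). intros z _.
    apply param_cont. apply gint_cont; auto. }
  assert (E1 : RInt (Ia a) 0 (2 * PI) = - RInt (Ia (- a)) 0 (2 * PI)).
  { rewrite <- (refl_RInt (Ia a) (2 * PI) (HexO a)).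
    rewrite (RInt_ext _ (fun y => - Ia (- a) y)).
    - exact (RInt_opp (V := R_CompleteNormedModule) _ 0 (2 * PI) (HexO (- a))).
    - intros y _. unfold Ia.
      rewrite (RInt_ext _ (fun s => - gint psi alpha c w p o (- a) y s)).
      + exact (RInt_opp (V := R_CompleteNormedModule) _ 0 1 (HexI (- a) y)).
      + intros s _. unfold gint. rewrite sin_refl.
        replace (a * s * (alpha * - sin (INR w * y))) with (- a * s * (alpha * sin (INR w * y))) by ring.
        match goal with |- ?x = ?y => change (@eq R x y) end. ring. }
  assert (E2 : RInt (fun tau => Ia a tau - Ia (- a) tau) 0 (2 * PI) = RInt (Ia a) 0 (2 * PI) - RInt (Ia (- a)) 0 (2 * PI)).
  { exact (RInt_minus (V := R_CompleteNormedModule) _ _ 0 (2 * PI) (HexO a) (HexO (- a))). }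
  set (B := alpha ^ 2 * c * (kap * vnorm (grad psi p))).
  assert (Hpt : forall tau, Rabs (Ia a tau - Ia (- a) tau) <= B).
  { intros tau. unfold Ia.
    assert (Ei : RInt (fun s => gint psi alpha c w p o a tau s - gint psi alpha c w p o (- a) tau s) 0 1 =
      RInt (gint psi alpha c w p o a tau) 0 1 - RInt (gint psi alpha c w p o (- a) tau) 0 1)
      by exact (RInt_minus (V := R_CompleteNormedModule) _ _ 0 1 (HexI a tau) (HexI (- a) tau)).
    rewrite <- Ei.
    replace B with ((1 - 0) * B) by ring.
    apply abs_RInt_le_const. lra.
    exact (ex_RInt_minus (V := R_NormedModule) _ _ 0 1 (HexI a tau) (HexI (- a) tau)).
    intros s Hs. change (Rabs (gint psi alpha c w p o a tau s - gint psi alpha c w p o (- a) tau s) <= B).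
    unfold gint.
    set (S := sin (INR w * tau)).
    replace (- a * s * (alpha * S)) with (- (a * s * (alpha * S))) by ring.
    set (t := a * s * (alpha * S)).
    set (Fp := dot (hess_apply psi (vadd p (vscal t o)) o) o).
    set (Fm := dot (hess_apply psi (vadd p (vscal (- t) o)) o) o).
    replace ((1 - s) * (alpha * S) ^ 2 * (c * S) * Fp - (1 - s) * (alpha * S) ^ 2 * (c * S) * Fm)
      with (((1 - s) * (alpha * S) ^ 2 * (c * S)) * (Fp - Fm)) by ring.
    rewrite Rabs_mult. unfold B.
    assert (HS : Rabs S <= 1) by apply abs_sin_le.
    assert (Ht : Rabs t <= T).
    { unfold t. rewrite !Rabs_mult. rewrite (Rabs_right a) by lra. rewrite (Rabs_right s) by lra.
      rewrite (Rabs_right alpha) by lra. pose proof (Rabs_pos S).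
      assert (a * alpha <= T) by (destruct Ha as [_ Ha]; apply (Rmult_le_compat_r alpha) in Ha; [|lra];
        replace (T / alpha * alpha) with T in Ha by (field; lra); lra).
      assert (0 <= a * s <= a) by (split; nra).
      assert (0 <= alpha * Rabs S <= alpha) by (split; nra).
      nra. }
    pose proof (Hkey p o t Ho Ht) as HK. fold Fp Fm in HK.
    pose proof (coef_bound alpha c s S Halpha Hc Hs HS) as HC.
    apply Rmult_le_compat; auto; apply Rabs_pos. }
  assert (HB : Rabs (RInt (fun tau => Ia a tau - Ia (- a) tau) 0 (2 * PI)) <= (2 * PI - 0) * B).
  { apply abs_RInt_le_const. pose proof PI_RGT_0; lra.
    exact (ex_RInt_minus (V := R_NormedModule) _ _ 0 (2 * PI) (HexO a) (HexO (- a))).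
    intros; apply Hpt. }
  rewrite E2 in HB.
  assert (E3 : RInt (Ia a) 0 (2 * PI) = / 2 * (RInt (Ia a) 0 (2 * PI) - RInt (Ia (- a)) 0 (2 * PI))) by lra.
  rewrite E3. rewrite !Rabs_mult.
  pose proof PI_RGT_0.
  rewrite (Rabs_right (/ (2 * PI))) by (apply Rle_ge; apply Rlt_le; apply Rinv_0_lt_compat; lra).
  rewrite (Rabs_right (/ 2)) by lra.
  apply (Rmult_le_reg_l (2 * PI)). lra.
  rewrite <- Rmult_assoc, Rinv_r by lra.
  unfold B in HB. lra.
Qed.
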